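(* Let $X$ be a crowded T$_D$ space. Then: (1) every open neighbourhood $O$ of a point $x\in X$ includes an open neighbourhood $O'$ of $x$ such that $O'-\{x\}$ is non-empty and open; (2) for every open $O\subseteq X$ and every $S\subseteq X$, if $O\subseteq\mathrm{cl}_XS$ then $O\subseteq\mathrm{d}_XS$; (3) $\mathrm{int}_X\mathrm{cl}_XS=\mathrm{int}_X\mathrm{d}_XS$ for every $S\subseteq X$; (4) for every topological model $\mathcal{M}$ on $X$ and every formula $\varphi$, $\mathcal{M}_d(\Diamond^*(\Box^*\varphi\lor\Box^*\neg\varphi))=\mathcal{M}_d(\Diamond(\Box\varphi\lor\Box\neg\varphi))$.
   Context: For $S\subseteq X$, $\mathrm{cl}_X S$, $\mathrm{int}_XS$ are closure and interior, and $\mathrm{d}_XS$ is the set of limit points of $S$ ($x$ such that every $O-\{x\}$, $O$ an open neighbourhood of $x$, meets $S$). $X$ is crowded if it has no isolated points, and T$_D$ if $\mathrm{d}_X\{x\}$ is closed for every $x$. $\Diamond^*\psi$ abbreviates $\psi\lor\Diamond\psi$ and $\Box^*\psi$ abbreviates $\psi\land\Box\psi$. A topological model $\mathcal{M}$ on $X$ is a valuation of propositional variables by subsets of $X$; $\mathcal{M}_d(\varphi)$ is defined inductively with Boolean connectives as set operations, $\mathcal{M}_d(\Diamond\varphi)=\mathrm{d}_X(\mathcal{M}_d(\varphi))$ and $\mathcal{M}_d(\Box\varphi)=\mathcal{M}_d(\neg\Diamond\neg\varphi)$. *)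

(* Defs.v *)
From mathcomp Require Import all_boot all_order.
From mathcomp Require Import all_classical topology.
Set Implicit Arguments. Unset Strict Implicit. Unset Printing Implicit Defensive.
Local Open Scope classical_set_scope.

Definition dset {X : topologicalType} (S : set X) : set X :=
  [set x | forall O : set X, open O -> O x -> (O `\ x) `&` S !=set0].

Definition crowded (X : topologicalType) : Prop :=
  forall x : X, ~ open [set x].

Definition TD_space (X : topologicalType) : Prop :=
  forall x : X, closed (dset [set x]).

Inductive form : Type :=
| Var : nat -> form
| Bot : form
| Neg : form -> form
| And : form -> form -> form
| Or  : form -> form -> form
| Dia : form -> form
| Box : form -> form.

Definition DiaS (p : form) : form := Or p (Dia p).
Definition BoxS (p : form) : form := And p (Box p).

Fixpoint dsem {X : topologicalType} (V : nat -> set X) (p : form) : set X :=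
  match p with
  | Var n => V n
  | Bot => set0
  | Neg q => ~` dsem V q
  | And q r => dsem V q `&` dsem V r
  | Or q r => dsem V q `|` dsem V r
  | Dia q => dset (dsem V q)
  | Box q => ~` dset (~` dsem V q)
  end.

(* Main.v *)
Require Import Defs.
From mathcomp Require Import all_boot all_order.
From mathcomp Require Import all_classical topology.
Local Open Scope classical_set_scope.

Lemma nbhs_of {X : topologicalType} (U A : set X) (y : X) :
  open U -> U y -> U `<=` A -> nbhs y A.
Proof. move=> oU Uy UA; rewrite nbhsE; exists U => //; by split. Qed.

Arguments nbhs_of {X U A y}.

Lemma open_local {X : topologicalType} (A : set X) :
  (forall y, A y -> exists U, [/\ open U, U y & U `<=` A]) -> open A.
Proof.
move=> H; rewrite openE => y /H [U [oU Uy UA]]; exact: nbhs_of oU Uy UA.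
Qed.

Lemma notd {X : topologicalType} (S : set X) (y : X) :
  ~ dset S y -> exists U, [/\ open U, U y & U `\ y `<=` ~` S].
Proof.
move=> nd; apply: contrapT => nex; apply: nd => O oO Oy.
apply: contrapT => /set0P/negP; rewrite negbK => /eqP e.
apply: nex; exists O; split => // z Oz Sz.
have : ((O `\ y) `&` S) z by [].
by rewrite e.
Qed.

Arguments notd {X S y}.

Lemma part1 {X : topologicalType} (hcr : crowded X) (htd : TD_space X) :
  forall (x : X) (O : set X), open O -> O x ->
     exists O' : set X, [/\ open O', O' x, O' `<=` O,
                          O' `\ x !=set0 & open (O' `\ x)].
Proof.
move=> x O oO Ox.
have nx : ~ dset [set x] x.
  move=> /(_ setT openT I) [z [[_ zx] zx2]]; exact: zx zx2.
have oC : open (~` dset [set x]) by apply: closed_openC; apply: htd.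
exists (O `&` ~` dset [set x]); split.
- exact: openI.
- by split.
- by move=> z [].
- apply: contrapT => /set0P/negP; rewrite negbK => /eqP e.
  apply: (hcr x); suff -> : [set x] = O `&` ~` dset [set x] by exact: openI.
  apply/seteqP; split => z.
  + by move=> ->; split.
  + move=> Hz; apply: contrapT => zx.
    have : (O `&` ~` dset [set x] `\ x) z by split.
    by rewrite e.
- apply: open_local => y [[Oy ndy] yx].
  have [U [oU Uy UsS]] := notd ndy.
  exists (U `&` (O `&` ~` dset [set x])); split.
  + apply: openI => //; exact: openI.
  + by split.
  + move=> z [Uz Oz]; split => // zx; have zx2 : z = x := zx; subst z.
    by apply: (UsS x) => //; split => // xy; apply: yx; rewrite xy.
Qed.

Lemma key {X : topologicalType} (hcr : crowded X) (htd : TD_space X)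
  (y : X) (N Q : set X) : open N -> N y -> N `\ y `<=` Q ->
  exists z, [/\ N z, z <> y, Q z & ~ dset (~` Q) z].
Proof.
move=> oN Ny NQ.
have [O' [oO' O'y O'N [z [O'z zy]] oO'y]] := part1 hcr htd _ _ oN Ny.
exists z; split => //.
- exact: O'N.
- by apply: NQ; split => //; apply: O'N.
- move=> /(_ _ oO'y (conj O'z zy)) [w [[[O'w wy] wz] nQw]].
  by apply: nQw; apply: NQ; split => //; apply: O'N.
Qed.

Arguments key {X} hcr htd {y N Q}.

Lemma dset_sub {X : topologicalType} (A B : set X) : A `<=` B -> dset A `<=` dset B.
Proof.
move=> AB x dA O oO Ox; have [z [Hz Az]] := dA O oO Ox; exists z; split => //; exact: AB.
Qed.

Lemma part2 {X : topologicalType} (hcr : crowded X) (htd : TD_space X) :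
  forall (O S : set X), open O -> O `<=` closure S -> O `<=` dset S.
Proof.
move=> O S oO OS x Ox U oU Ux.
have [O' [oO' O'x O'UO [y [O'y yx]] oO'x]] := part1 hcr htd _ _ (openI oU oO) (conj Ux Ox).
have Oy : O y by have [] := O'UO y O'y.
have [z [Sz [O'z zx]]] := OS y Oy (O' `\ x) (nbhs_of oO'x (conj O'y yx) (fun _ h => h)).
exists z; split => //; split => //; by have [] := O'UO z O'z.
Qed.

Lemma dset_closure {X : topologicalType} (S : set X) : dset S `<=` closure S.
Proof.
move=> x dx B; rewrite nbhsE => -[U [oU Ux] UB].
have [z [[Uz _] Sz]] := dx U oU Ux; exists z; split => //; exact: UB.
Qed.

Theorem lemma8 (X : topologicalType) (hcr : crowded X) (htd : TD_space X) :
  (forall (x : X) (O : set X), open O -> O x ->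
     exists O' : set X, [/\ open O', O' x, O' `<=` O,
                          O' `\ x !=set0 & open (O' `\ x)]) /\
  (forall (O S : set X), open O -> O `<=` closure S -> O `<=` dset S) /\
  (forall S : set X, interior (closure S) = interior (dset S)) /\
  (forall (V : nat -> set X) (p : form),
     dsem V (DiaS (Or (BoxS p) (BoxS (Neg p)))) =
     dsem V (Dia (Or (Box p) (Box (Neg p))))).
Proof.
split; first exact: part1.
split; first exact: part2.
split.
  move=> S; apply/seteqP; split => x.
  - rewrite /interior nbhsE => -[U [oU Ux] US].
    exists U => //; exact: (part2 hcr htd _ _ oU US).
  - by apply: filterS; apply: dset_closure.
move=> V p /=.
set P := dsem V p.
apply/seteqP; split => x.
- case=> [[[Px nd]|[Px nd]]|dB].
  + have [U [oU Ux UP]] := notd nd.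
    move=> W oW Wx.
    have [z [[Wz Uz] zx Qz ndz]] := key hcr htd (Q := P) (openI oW oU) (conj Wx Ux)
      (fun z '(conj (conj _ Uz) zx) => @contrapT _ (fun nz => UP z (conj Uz zx) nz)).
    by exists z; split; [split|left].
  + have [U [oU Ux UP]] := notd nd.
    move=> W oW Wx.
    have [z [[Wz Uz] zx Qz ndz]] := key hcr htd (Q := ~` P) (openI oW oU) (conj Wx Ux)
      (fun z '(conj (conj _ Uz) zx) => fun pz => UP z (conj Uz zx) (fun h => h pz)).
    by exists z; split; [split|right].
  + move: x dB; apply: dset_sub => z [[_ h]|[_ h]]; [left|right]; exact: h.
- move=> dA; right => W oW Wx.
  have [O' [oO' O'x O'W _ oO'x]] := part1 hcr htd _ _ oW Wx.
  have [y [[O'y yx] Ay]] := dA _ oO' O'x.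
  case: Ay => nd.
  + have [U [oU Uy UP]] := notd nd.
    have [z [[[O'z zx] Uz] zy Qz ndz]] := key hcr htd (Q := P) (openI oO'x oU) (conj (conj O'y yx) Uy)
      (fun z '(conj (conj _ Uz) zy) => @contrapT _ (fun nz => UP z (conj Uz zy) nz)).
    by exists z; split; [split; [exact: O'W|]|left].
  + have [U [oU Uy UP]] := notd nd.
    have [z [[[O'z zx] Uz] zy Qz ndz]] := key hcr htd (Q := ~` P) (openI oO'x oU) (conj (conj O'y yx) Uy)
      (fun z '(conj (conj _ Uz) zy) => fun pz => UP z (conj Uz zy) (fun h => h pz)).
    by exists z; split; [split; [exact: O'W|]|right].
Qed.
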